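(* Let $U$ and $W$ be two normalized graphons. Then $d_{\mathrm{LP}}(D_U,D_W)\le\sqrt{2\,\delta_\square(U,W)}$.
   Context: A graphon over $(\Omega,\mathcal F,\pi)$ is a measurable symmetric $W:\Omega\times\Omega\to[0,\infty)$ with $\int W<\infty$; it is normalized if $\int W\,d\pi\,d\pi=1$. Its degrees are the random variable $W_x=\int_\Omega W(x,y)\,d\pi(y)$ with $x\sim\pi$, with distribution function $D_W(\lambda)=\pi(\{x:W_x\le\lambda\})$. The Lévy–Prokhorov distance between distribution functions is $d_{\mathrm{LP}}(D,D')=\inf\{\varepsilon>0:D'(\lambda-\varepsilon)-\varepsilon\le D(\lambda)\le D'(\lambda+\varepsilon)+\varepsilon\ \text{for all }\lambda\in\mathbb R\}$. For graphons $W$ on $(\Omega,\pi)$ and $W'$ on $(\Omega',\pi')$, $\delta_\square(W,W')=\inf_\nu\sup_{S,T}|\int_{S\times T}(W(x,y)-W'(x',y'))\,d\nu(x,x')\,d\nu(y,y')|$, the infimum over couplings $\nu$ of $\pi,\pi'$ and supremum over measurable $S,T\subseteq\Omega\times\Omega'$. *)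

(* Defs.v *)
From HB Require Import structures.
From mathcomp Require Import all_boot all_order all_algebra.
From mathcomp Require Import all_classical all_reals all_analysis.
Set Implicit Arguments. Unset Strict Implicit. Unset Printing Implicit Defensive.
Import Order.TTheory GRing.Theory Num.Theory.
Local Open Scope classical_set_scope.
Local Open Scope ring_scope.

Section Graphons.
Context {R : realType}.

Definition graphon {d} {T : measurableType d} (P : probability T R)
  (W : T -> T -> R) : Prop :=
  [/\ measurable_fun setT (fun p : T * T => W p.1 p.2),
      (forall x y, W x y = W y x),
      (forall x y, 0 <= W x y) &
      (P \x P)%E.-integrable setT (fun p : T * T => (W p.1 p.2)%:E)].

Definition normalized {d} {T : measurableType d} (P : probability T R)
  (W : T -> T -> R) : Prop :=
  (\int[(P \x P)%E]_p (W p.1 p.2)%:E = 1)%E.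

Definition degree {d} {T : measurableType d} (P : probability T R)
  (W : T -> T -> R) (x : T) : R :=
  fine (\int[P]_y (W x y)%:E)%E.

Definition degree_dist {d} {T : measurableType d} (P : probability T R)
  (W : T -> T -> R) (lam : R) : R :=
  fine (P [set x | degree P W x <= lam]).

Definition d_LP (D D' : R -> R) : R :=
  inf [set eps : R | 0 < eps /\
        forall lam : R, D' (lam - eps) - eps <= D lam /\
                        D lam <= D' (lam + eps) + eps].

Definition coupling {d d'} {T : measurableType d} {T' : measurableType d'}
  (P : probability T R) (P' : probability T' R)
  (nu : probability (T * T')%type R) : Prop :=
  (forall A : set T, measurable A -> nu (A `*` setT) = P A) /\
  (forall B : set T', measurable B -> nu (setT `*` B) = P' B).

Definition cut_sup {d d'} {T : measurableType d} {T' : measurableType d'}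
  (nu : probability (T * T')%type R) (W : T -> T -> R) (W' : T' -> T' -> R)
  : \bar R :=
  ereal_sup [set e : \bar R | exists S S' : set (T * T'),
     [/\ measurable S, measurable S' &
       e = `| \int[(nu \x nu)%E]_(z in S `*` S')
                ((W z.1.1 z.2.1 - W' z.1.2 z.2.2)%:E) |%E]].

(** cut distance delta_square(W, W'): infimum over couplings. It is finite
    for graphons; we take its real value. *)
Definition cut_dist {d d'} {T : measurableType d} {T' : measurableType d'}
  (P : probability T R) (P' : probability T' R)
  (W : T -> T -> R) (W' : T' -> T' -> R) : R :=
  fine (ereal_inf [set e : \bar R | exists nu : probability (T * T')%type R,
                      coupling P P' nu /\ e = cut_sup nu W W']).

End Graphons.

(* Main.v *)
Require Import Defs.
From HB Require Import structures.
From mathcomp Require Import all_boot all_order all_algebra.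
From mathcomp Require Import all_classical all_reals all_analysis.
Set Implicit Arguments. Unset Strict Implicit. Unset Printing Implicit Defensive.
From mathcomp Require Import measurable_realfun.
From mathcomp Require Import ring lra unstable.
Import Order.TTheory GRing.Theory Num.Theory.
Import numFieldNormedType.Exports.
Local Open Scope classical_set_scope.
Local Open Scope ring_scope.
Local Open Scope ereal_scope.

Lemma tonelli_S (R : realType) d (X : measurableType d) (nu : probability X R)
  (F : (X * X)%type -> \bar R) :
  measurable_fun setT F -> (forall p, 0 <= F p) -> forall S, measurable S ->
  \int[(nu \x nu)%E]_(p in S `*` setT) F p = \int[nu]_(x in S) \int[nu]_y F (x, y).
Proof.
move=> mF F0 S mS.
have mST : measurable (S `*` [set: X]) by apply: measurableX.
rewrite integral_mkcond fubini_tonelli1.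
- rewrite [RHS]integral_mkcond; apply: eq_integral => x _.
  rewrite /fubini_F /patch; case: ifPn => xS.
    apply: eq_integral => y _; rewrite ifT // inE; split=> //.
    by move: xS; rewrite inE.
  rewrite (eq_integral (cst 0)) ?integral0// => y _.
  rewrite ifF //; apply/negbTE; apply: contra xS; rewrite !inE; by case.
- by apply/(measurable_restrictT _ _).1 => //; exact: measurable_funTS.
- by move=> p; rewrite /patch; case: ifP.
Qed.

Section core.
Context (R : realType) d (X : measurableType d) (nu : probability X R).
Context (A B : X -> X -> R).
Hypotheses (mA : measurable_fun setT (fun p : X * X => (A p.1 p.2)%:E))
  (mB : measurable_fun setT (fun p : X * X => (B p.1 p.2)%:E))
  (A0 : forall x y, (0 <= A x y)%R) (B0 : forall x y, (0 <= B x y)%R).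
Let a := fubini_F nu (fun p : X * X => (A p.1 p.2)%:E).
Let b := fubini_F nu (fun p : X * X => (B p.1 p.2)%:E).
Hypotheses (ia : \int[nu]_x a x < +oo) (ib : \int[nu]_x b x < +oo).
Variable c : R.
Hypothesis Hc : forall S, measurable S ->
  `| \int[(nu \x nu)%E]_(p in S `*` setT) (A p.1 p.2)%:E
   - \int[(nu \x nu)%E]_(p in S `*` setT) (B p.1 p.2)%:E | <= c%:E.

Let ma : measurable_fun setT a.
Proof. by apply: measurable_fun_fubini_tonelli_F => // p; rewrite lee_fin. Qed.
Let mb : measurable_fun setT b.
Proof. by apply: measurable_fun_fubini_tonelli_F => // p; rewrite lee_fin. Qed.
Let a0 x : 0 <= a x.
Proof. by apply: integral_ge0 => y _; rewrite lee_fin. Qed.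
Let b0 x : 0 <= b x.
Proof. by apply: integral_ge0 => y _; rewrite lee_fin. Qed.

Let mle (f : X -> \bar R) (r : R) : measurable_fun setT f -> measurable [set z | f z <= r%:E].
Proof.
move=> mf; rewrite -(setTI [set z | _]).
by apply: measurable_lee => //; exact: measurable_cst.
Qed.
Let mlt (f : X -> \bar R) (r : R) : measurable_fun setT f -> measurable [set z | r%:E < f z].
Proof.
move=> mf; rewrite -(setTI [set z | _]).
by apply: measurable_lte => //; exact: measurable_cst.
Qed.

Lemma core (lam eps : R) : (0 < eps)%R ->
  nu [set z | a z <= lam%:E] <= nu [set z | b z <= (lam + eps)%:E] + (c / eps)%:E.
Proof.
move=> eps0.
have c0 : (0 <= c)%R.
  by have := Hc measurable0; rewrite set0X !integral_set0 subee// abse0 lee_fin.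
case: (leP 0%R lam) => lam0; last first.
  rewrite (_ : [set z | a z <= lam%:E] = set0).
    by rewrite measure0 adde_ge0// lee_fin divr_ge0// ltW.
  apply/seteqP; split=> z //= h; have := le_trans (a0 z) h.
  by rewrite lee_fin leNgt lam0.
set S := [set z | a z <= lam%:E] `&` [set z | (lam + eps)%:E < b z].
have mS : measurable S by apply: measurableI; [exact: mle|exact: mlt].
have sub : [set z | a z <= lam%:E] `<=` [set z | b z <= (lam + eps)%:E] `|` S.
  move=> z azl; have [bz|bz] := leP (b z) ((lam + eps)%:E); [by left|by right].
have mL : measurable [set z | a z <= lam%:E] by exact: mle.
have mR : measurable [set z | b z <= (lam + eps)%:E] by exact: mle.
apply: (le_trans (le_measure _ _ _ sub)); rewrite ?inE//; first exact: measurableU.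
apply: (le_trans (measureU2 _ _ _)) => //; rewrite leeD2l//.
have IA := tonelli_S nu mA (fun p => A0 p.1 p.2) mS.
have IB := tonelli_S nu mB (fun p => B0 p.1 p.2) mS.
have HcS := Hc mS; rewrite IA IB in HcS.
have IAle : \int[nu]_(x in S) a x <= lam%:E * nu S.
  rewrite -integral_cst//; apply: ge0_le_integral => //.
  - exact: measurable_funTS.
  - by move=> x [].
have IBge : (lam + eps)%:E * nu S <= \int[nu]_(x in S) b x.
  rewrite -integral_cst//; apply: ge0_le_integral => //.
  - by move=> x _; rewrite /= lee_fin; lra.
  - exact: measurable_funTS.
  - by move=> x [] _ /ltW.
have finA : \int[nu]_(x in S) a x \is a fin_num.
  rewrite ge0_fin_numE; last by apply: integral_ge0 => x _; exact: a0.
  apply: le_lt_trans ia; apply: ge0_subset_integral => //.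
have finB : \int[nu]_(x in S) b x \is a fin_num.
  rewrite ge0_fin_numE; last by apply: integral_ge0 => x _; exact: b0.
  apply: le_lt_trans ib; apply: ge0_subset_integral => //.
have finS : nu S \is a fin_num.
  rewrite ge0_fin_numE//; apply: (le_lt_trans (probability_le1 _ mS)); exact: ltey.
apply: (@le_trans _ _ ((fine (nu S))%:E)); first by rewrite fineK.
move: IAle IBge HcS.
rewrite -(fineK finA) -(fineK finB) -(fineK finS) -!EFinM -EFinB abse_EFin !lee_fin.
set ia' := fine (\int[nu]_(x in S) a x); set ib' := fine (\int[nu]_(x in S) b x); set s := fine (nu S).
move=> h1 h2 h3; rewrite ler_pdivlMr//.
have h4 : (ib' - ia' <= c)%R.
  by apply: le_trans _ h3; rewrite distrC; exact: ler_norm.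
have e1 : ((lam + eps) * s = lam * s + s * eps)%R by ring.
rewrite /=; lra.
Qed.
End core.

Section transfer.
Context (R : realType) d (X : measurableType d) (nu : probability X R)
  d' (Y : measurableType d') (Q : probability Y R) (pi : X -> Y).
Hypotheses (mpi : measurable_fun setT pi)
  (Hpi : forall A, measurable A -> nu (pi @^-1` A) = Q A).

Lemma margG (h : Y -> \bar R) : measurable_fun setT h -> (forall y, 0 <= h y) ->
  \int[nu]_z h (pi z) = \int[Q]_y h y.
Proof.
move=> mh h0.
rewrite (eq_measure_integral (pushforward nu pi)).
2:{ move=> A mA _; transitivity (nu (pi @^-1` A)); last reflexivity.
  by rewrite Hpi. }
by rewrite ge0_integral_pushforward.
Qed.

Let mleY (f : Y -> \bar R) (r : R) : measurable_fun setT f -> measurable [set z | f z <= r%:E].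
Proof.
move=> mf; rewrite -(setTI [set z | _]).
by apply: measurable_lee => //; exact: measurable_cst.
Qed.
Let mleX (f : X -> \bar R) (r : R) : measurable_fun setT f -> measurable [set z | f z <= r%:E].
Proof.
move=> mf; rewrite -(setTI [set z | _]).
by apply: measurable_lee => //; exact: measurable_cst.
Qed.

Context (g : Y -> \bar R) (mg : measurable_fun setT g) (g0 : forall y, 0 <= g y)
  (ig : \int[Q]_y g y < +oo).

Let mN : measurable [set y | g y = +oo].
Proof.
have := mg measurableT (emeasurable_set1 +oo); rewrite setTI; exact.
Qed.

Lemma null_inf : Q [set y | g y = +oo] = 0.
Proof.
have iQ : Q.-integrable setT g.
  apply/integrableP; split => //.
  by under eq_integral do rewrite gee0_abs//.
have [M [mM M0 sub]] := integrable_ae measurableT iQ.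
apply/(negligibleP _ mN); exists M; split => // y /= gy; apply: sub => /=.
by move/(_ I); rewrite gy.
Qed.

Let mF r : measurable [set y | (fine (g y) <= r)%R].
Proof.
have mfg : measurable_fun setT (fine \o g).
  exact: measurableT_comp (fine_measurable measurableT) mg.
have := mfg measurableT _ (measurable_itv `]-oo, r]); rewrite setTI.
rewrite (_ : _ @^-1` _ = [set y | (fine (g y) <= r)%R]) //.
Qed.

Let mpiS (A : set Y) : measurable A -> measurable (pi @^-1` A).
Proof. by move=> mA; have := mpi measurableT mA; rewrite setTI. Qed.

Lemma transfer1 r : Q [set y | (fine (g y) <= r)%R] <= nu [set z | g (pi z) <= r%:E].
Proof.
rewrite -Hpi; last exact: mF.
have sub : pi @^-1` [set y | (fine (g y) <= r)%R] `<=`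
    [set z | g (pi z) <= r%:E] `|` pi @^-1` [set y | g y = +oo].
  move=> z /= Fz; case: (eqVneq (g (pi z)) +oo) => [->|gz]; [by right|left].
  have fz : g (pi z) \is a fin_num by rewrite ge0_fin_numE// ltey.
  by rewrite -(fineK fz) lee_fin.
have mG : measurable [set z | g (pi z) <= r%:E].
  by apply: mleX; exact: measurableT_comp.
apply: (le_trans (le_measure _ _ _ sub)); rewrite ?inE.
- exact: mpiS (mF r).
- by apply: measurableU => //; exact: mpiS.
have h : nu ([set z | g (pi z) <= r%:E] `|` pi @^-1` [set y | g y = +oo]) <=
    nu [set z | g (pi z) <= r%:E] + nu (pi @^-1` [set y | g y = +oo]).
  by apply: measureU2 => //; exact: mpiS.
by move: h; rewrite Hpi// null_inf adde0.
Qed.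

Lemma transfer2 r : nu [set z | g (pi z) <= r%:E] <= Q [set y | (fine (g y) <= r)%R].
Proof.
rewrite -Hpi; last exact: mF.
have mG : measurable [set z | g (pi z) <= r%:E].
  by apply: mleX; exact: measurableT_comp.
apply: le_measure; rewrite ?inE//; first exact: mpiS (mF r).
move=> z /= gz; have fz : g (pi z) \is a fin_num.
  by rewrite ge0_fin_numE//; apply: le_lt_trans gz _; exact: ltey.
by rewrite -lee_fin fineK.
Qed.
Lemma fin_Q r : Q [set y | (fine (g y) <= r)%R] \is a fin_num.
Proof.
rewrite ge0_fin_numE//; apply: (le_lt_trans (probability_le1 _ (mF r))); exact: ltey.
Qed.
End transfer.

Lemma fine_ineq (R : realType) (x y : \bar R) (r : R) : x \is a fin_num -> y \is a fin_num ->
  x <= y + r%:E -> (fine x <= fine y + r)%R.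
Proof. by move=> fx fy; rewrite -(fineK fx) -(fineK fy) -EFinD lee_fin. Qed.

Section cpl.
Context (R : realType) d d' (T : measurableType d) (T' : measurableType d')
  (P : probability T R) (P' : probability T' R) (U : T -> T -> R) (W : T' -> T' -> R).

Lemma gfacts d0 (T0 : measurableType d0) (P0 : probability T0 R) (V : T0 -> T0 -> R) :
  graphon P0 V -> normalized P0 V ->
  [/\ measurable_fun setT (fun p : T0 * T0 => (V p.1 p.2)%:E),
    measurable_fun setT (fun x => \int[P0]_y (V x y)%:E),
    (forall x, 0 <= \int[P0]_y (V x y)%:E),
    (forall x y, (0 <= V x y)%R) &
    \int[P0]_x \int[P0]_y (V x y)%:E = 1].
Proof.
move=> [mV _ V0 _] nV.
have mVE : measurable_fun setT (fun p : T0 * T0 => (V p.1 p.2)%:E).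
  exact/measurable_EFinP.
split => //.
- have := @measurable_fun_fubini_tonelli_F _ _ _ _ _ P0 _ mVE.
  by apply => p; rewrite lee_fin.
- by move=> x; apply: integral_ge0 => y _; rewrite lee_fin.
- rewrite -nV (@fubini_tonelli1 _ _ _ _ _ P0 P0 _ mVE) //.
  by move=> p; rewrite lee_fin.
Qed.

Hypotheses (gU : graphon P U) (nU : normalized P U) (gW : graphon P' W) (nW : normalized P' W).
Context (nu : probability (T * T')%type R) (cpl : coupling P P' nu).

Let Hfst (A : set T) : measurable A -> nu (fst @^-1` A) = P A.
Proof.
move=> mA; have -> : fst @^-1` A = A `*` [set: T'].
  by apply/seteqP; split=> -[x y] //= [].
by rewrite cpl.1.
Qed.
Let Hsnd (A : set T') : measurable A -> nu (snd @^-1` A) = P' A.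
Proof.
move=> mA; have -> : snd @^-1` A = [set: T] `*` A.
  by apply/seteqP; split=> -[x y] //= [].
by rewrite cpl.2.
Qed.

Let fA := fun p : (T * T') * (T * T') => (U p.1.1 p.2.1)%:E.
Let fB := fun p : (T * T') * (T * T') => (W p.1.2 p.2.2)%:E.

Let mfA : measurable_fun setT fA.
Proof.
have [mUE _ _ _ _] := gfacts gU nU.
have h1 : measurable_fun setT (fun p : (T * T') * (T * T') => p.1.1).
  exact: (measurableT_comp measurable_fst measurable_fst).
have h2 : measurable_fun setT (fun p : (T * T') * (T * T') => p.2.1).
  exact: (measurableT_comp measurable_fst measurable_snd).
by have := measurableT_comp mUE (measurable_fun_pair h1 h2).
Qed.
Let mfB : measurable_fun setT fB.
Proof.
have [mWE _ _ _ _] := gfacts gW nW.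
have h1 : measurable_fun setT (fun p : (T * T') * (T * T') => p.1.2).
  exact: (measurableT_comp measurable_snd measurable_fst).
have h2 : measurable_fun setT (fun p : (T * T') * (T * T') => p.2.2).
  exact: (measurableT_comp measurable_snd measurable_snd).
by have := measurableT_comp mWE (measurable_fun_pair h1 h2).
Qed.
Let fA0 p : 0 <= fA p.
Proof. have [_ _ _ U0 _] := gfacts gU nU; by rewrite lee_fin. Qed.
Let fB0 p : 0 <= fB p.
Proof. have [_ _ _ W0 _] := gfacts gW nW; by rewrite lee_fin. Qed.

Let aE : fubini_F nu fA = fun z => \int[P]_y (U z.1 y)%:E.
Proof.
have [mUE _ _ _ _] := gfacts gU nU.
apply/funext => z; rewrite /fubini_F /fA /=.
have := margG measurable_fst Hfst (h := fun y => (U z.1 y)%:E).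
by apply => // [|y]; [exact: (measurable_fun_pair2 z.1 mUE)|rewrite lee_fin; case: gU].
Qed.
Let bE : fubini_F nu fB = fun z => \int[P']_y (W z.2 y)%:E.
Proof.
have [mWE _ _ _ _] := gfacts gW nW.
apply/funext => z; rewrite /fubini_F /fB /=.
have := margG measurable_snd Hsnd (h := fun y => (W z.2 y)%:E).
by apply => // [|y]; [exact: (measurable_fun_pair2 z.2 mWE)|rewrite lee_fin; case: gW].
Qed.

Let ia : \int[nu]_x fubini_F nu fA x = 1.
Proof.
have [_ mdU dU0 _ i1] := gfacts gU nU.
rewrite aE; have := margG measurable_fst Hfst (h := fun x => \int[P]_y (U x y)%:E).
by move=> ->.
Qed.
Let ib : \int[nu]_x fubini_F nu fB x = 1.
Proof.
have [_ mdW dW0 _ i1] := gfacts gW nW.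
rewrite bE; have := margG measurable_snd Hsnd (h := fun x => \int[P']_y (W x y)%:E).
by move=> ->.
Qed.

Let intF (F : (T * T') * (T * T') -> \bar R) : measurable_fun setT F -> (forall p, 0 <= F p) ->
  \int[nu]_x fubini_F nu F x = 1 ->
  forall S, measurable S -> (nu \x nu)%E.-integrable (S `*` setT) F.
Proof.
move=> mF F0 iF S mS; apply/integrableP; split.
  by apply: measurable_funTS.
under eq_integral do rewrite gee0_abs//.
rewrite tonelli_S//.
apply: (@le_lt_trans _ _ (\int[nu]_(x in setT) fubini_F nu F x)); last by rewrite iF ltry.
apply: ge0_subset_integral => //.
- exact: measurable_fun_fubini_tonelli_F.
- by move=> x _; apply: integral_ge0.
Qed.

Let intA := intF mfA fA0 ia.
Let intB := intF mfB fB0 ib.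

Lemma HcAB c : cut_sup nu U W <= c%:E -> forall S, measurable S ->
  `| \int[(nu \x nu)%E]_(p in S `*` setT) fA p - \int[(nu \x nu)%E]_(p in S `*` setT) fB p | <= c%:E /\
  `| \int[(nu \x nu)%E]_(p in S `*` setT) fB p - \int[(nu \x nu)%E]_(p in S `*` setT) fA p | <= c%:E.
Proof.
move=> Hcs S mS.
have mST : measurable (S `*` [set: T * T']) by exact: measurableX.
have h1 : `| \int[(nu \x nu)%E]_(p in S `*` setT) fA p - \int[(nu \x nu)%E]_(p in S `*` setT) fB p | <= c%:E.
  apply: le_trans Hcs; apply: ereal_sup_ubound; exists S, setT; split => //.
  rewrite -integralB//.
  - exact: (intA mS).
  - exact: (intB mS).
split => //.
have fa := integrable_fin_num mST (intA mS); have fb := integrable_fin_num mST (intB mS).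
move: h1; rewrite -(fineK fa) -(fineK fb) -!EFinB !abse_EFin.
by rewrite distrC.
Qed.

Lemma bound1 c eps : cut_sup nu U W <= c%:E -> (0 < eps)%R -> forall lam,
  (degree_dist P U lam <= degree_dist P' W (lam + eps) + c / eps)%R.
Proof.
move=> Hcs eps0 lam.
have [mUE mdU dU0 U0 iU] := gfacts gU nU.
have [mWE mdW dW0 W0 iW] := gfacts gW nW.
have iU' : \int[P]_x \int[P]_y (U x y)%:E < +oo by rewrite iU ltry.
have iW' : \int[P']_x \int[P']_y (W x y)%:E < +oo by rewrite iW ltry.
have core1 : nu [set z | fubini_F nu fA z <= lam%:E] <=
    nu [set z | fubini_F nu fB z <= (lam + eps)%:E] + (c / eps)%:E.
  apply: (core (A := fun z1 z2 => U z1.1 z2.1) (B := fun z1 z2 => W z1.2 z2.2)) => //.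
  - by rewrite ia ltry.
  - by rewrite ib ltry.
  - by move=> S mS; have [] := HcAB Hcs mS.
rewrite aE bE in core1.
rewrite /degree_dist /degree; apply: fine_ineq.
- exact: fin_Q.
- exact: fin_Q.
apply: le_trans (transfer1 measurable_fst Hfst mdU dU0 iU' lam) _.
apply: le_trans core1 _; rewrite leeD2r//.
exact: (transfer2 measurable_snd Hsnd mdW dW0 (lam + eps)).
Qed.

Lemma bound2 c eps : cut_sup nu U W <= c%:E -> (0 < eps)%R -> forall lam,
  (degree_dist P' W lam <= degree_dist P U (lam + eps) + c / eps)%R.
Proof.
move=> Hcs eps0 lam.
have [mUE mdU dU0 U0 iU] := gfacts gU nU.
have [mWE mdW dW0 W0 iW] := gfacts gW nW.
have iU' : \int[P]_x \int[P]_y (U x y)%:E < +oo by rewrite iU ltry.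
have iW' : \int[P']_x \int[P']_y (W x y)%:E < +oo by rewrite iW ltry.
have core1 : nu [set z | fubini_F nu fB z <= lam%:E] <=
    nu [set z | fubini_F nu fA z <= (lam + eps)%:E] + (c / eps)%:E.
  apply: (core (A := fun z1 z2 => W z1.2 z2.2) (B := fun z1 z2 => U z1.1 z2.1)) => //.
  - by rewrite ib ltry.
  - by rewrite ia ltry.
  - by move=> S mS; have [] := HcAB Hcs mS.
rewrite aE bE in core1.
rewrite /degree_dist /degree; apply: fine_ineq.
- exact: fin_Q.
- exact: fin_Q.
apply: le_trans (transfer1 measurable_snd Hsnd mdW dW0 iW' lam) _.
apply: le_trans core1 _; rewrite leeD2r//.
exact: (transfer2 measurable_fst Hfst mdU dU0 (lam + eps)).
Qed.

Lemma cut_sup_ge0 : 0 <= cut_sup nu U W.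
Proof.
apply: le_trans (ereal_sup_ubound _); last first.
  exists set0, set0; split => //; reflexivity.
by rewrite set0X integral_set0 abse0.
Qed.

Lemma cut_sup_le2 : cut_sup nu U W <= 2%:E.
Proof.
apply: ub_ereal_sup => _ [S [S' [mS mS' ->]]].
have mSS : measurable (S `*` S') by exact: measurableX.
have mAB0 : measurable_fun setT (fun z : (T * T') * (T * T') => (U z.1.1 z.2.1 - W z.1.2 z.2.2)%:E).
  have := emeasurable_funB mfA mfB.
  by apply: eq_measurable_fun => z _; rewrite /fA /fB -EFinB.
have mAB := measurable_funTS (D := S `*` S') mAB0.
apply: le_trans (le_abse_integral _ mSS mAB) _.
apply: (@le_trans _ _ (\int[(nu \x nu)%E]_(z in S `*` S') (fA z + fB z))).
  apply: ge0_le_integral => //.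
  - exact: measurableT_comp (@abse_measurable _ setT) mAB.
  - by apply: emeasurable_funD; exact: measurable_funTS.
  move=> z _; rewrite /fA /fB /= -EFinD; rewrite lee_fin.
  have [_ _ _ U0 _] := gfacts gU nU; have [_ _ _ W0 _] := gfacts gW nW.
  have h1 := U0 z.1.1 z.2.1; have h2 := W0 z.1.2 z.2.2.
  by rewrite ler_norml; apply/andP; split; lra.
rewrite ge0_integralD//; [|exact: measurable_funTS|exact: measurable_funTS].
have le1 (F : (T * T') * (T * T') -> \bar R) : measurable_fun setT F -> (forall p, 0 <= F p) ->
    \int[nu]_x fubini_F nu F x = 1 -> \int[(nu \x nu)%E]_(z in S `*` S') F z <= 1.
  move=> mF F0 iF.
  apply: (@le_trans _ _ (\int[(nu \x nu)%E]_(z in setT) F z)).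
    exact: (ge0_subset_integral _ mSS measurableT).
  rewrite -setXTT (tonelli_S nu mF F0 measurableT) -iF.
  apply: ge0_subset_integral => //.
  - exact: measurable_fun_fubini_tonelli_F.
  - by move=> x _; apply: integral_ge0.
apply: le_trans (leeD (le1 _ mfA fA0 ia) (le1 _ mfB fB0 ib)) _.
by rewrite -EFinD.
Qed.
End cpl.

Local Open Scope ring_scope.
Theorem theorem2p16 (R : realType) (d d' : measure_display)
  (T : measurableType d) (T' : measurableType d')
  (P : probability T R) (P' : probability T' R)
  (U : T -> T -> R) (W : T' -> T' -> R) :
  graphon P U -> normalized P U ->
  graphon P' W -> normalized P' W ->
  d_LP (degree_dist P U) (degree_dist P' W)
    <= Num.sqrt (2 * cut_dist P P' U W).
Proof.
move=> gU nU gW nW.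
rewrite /cut_dist.
set E := ereal_inf _.
have cpl0 : coupling P P' ((P \x P')%E : probability _ R).
  split=> A mA /=.
  - rewrite product_measure1E//; transitivity (P A * 1)%E; last exact: mule1.
    by congr (_ * _)%E; exact: probability_setT.
  - rewrite product_measure1E//; transitivity (1 * P' A)%E; last exact: mul1e.
    by congr (_ * _)%E; exact: probability_setT.
have E2 : (E <= 2%:E)%E.
  apply: le_trans (cut_sup_le2 gU nU gW nW cpl0).
  by apply: ereal_inf_lbound; exists ((P \x P')%E : probability _ R).
have E0 : (0 <= E)%E.
  by apply: le_ereal_inf_tmp => _ [nu [_ ->]]; exact: cut_sup_ge0.
have finE : E \is a fin_num by rewrite ge0_fin_numE// (le_lt_trans E2)// ltry.
set dl := fine E.
have dl0 : 0 <= dl by exact: fine_ge0.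
apply: (@le_trans _ _ (Num.sqrt dl)); last by apply: ler_wsqrtr; lra.
apply/ler_gtP => eps heps.
have eps0 : 0 < eps by apply: le_lt_trans heps; exact: sqrtr_ge0.
have dle : dl < eps * eps.
  have := sqr_sqrtr dl0; rewrite expr2 => <-.
  have := sqrtr_ge0 dl; nra.
have : (E < (eps * eps)%:E)%E by rewrite -(fineK finE) lte_fin.
move=> /ereal_inf_lt [_ [nu [cpl ->]] hlt].
have fc : cut_sup nu U W \is a fin_num.
  by rewrite ge0_fin_numE ?cut_sup_ge0// (lt_trans hlt)// ltry.
set c := fine (cut_sup nu U W).
have Hcs : (cut_sup nu U W <= c%:E)%E by rewrite fineK.
have ce : c < eps * eps by rewrite -lte_fin fineK.
have ceps : c / eps <= eps by rewrite ler_pdivrMr//; exact: ltW.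
apply: ge_inf.
  by exists 0 => y [y0 _]; exact: ltW.
split=> // lam; split.
- have := bound2 gU nU gW nW cpl Hcs eps0 (lam - eps); rewrite subrK; lra.
- have := bound1 gU nU gW nW cpl Hcs eps0 lam; lra.
Qed.
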